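(* Let $\alpha_1,\alpha_2$ be positive integers with $\alpha_2\ge2$ and $n=\alpha_1+\alpha_2$. The Laplacian spectrum of $C(\alpha_1,\alpha_2)$ is $\{n^{(\alpha_1)},\ \alpha_1^{(\alpha_2-1)},\ 0^{(1)}\}$ (superscripts are multiplicities), so it has exactly three distinct Laplacian eigenvalues. Moreover, a $\mathcal{C}$-graph $C(\alpha_1,\dots,\alpha_k)$ ($k$ even) has exactly three distinct Laplacian eigenvalues if and only if $k=2$ and $\alpha_2\ge2$.
   Context: $C(\alpha_1,\dots,\alpha_k)$ is defined recursively by $C(\alpha_1)=\overline{K_{\alpha_1}}$ (edgeless graph) and $C(\alpha_1,\dots,\alpha_i)=\overline{C(\alpha_1,\dots,\alpha_{i-1})\cup K_{\alpha_i}}$ for $i=2,\dots,k$ (disjoint union, then complement); with $k$ even it is called a $\mathcal{C}$-graph. In particular $C(\alpha_1,\alpha_2)$ is the complete split graph $K_{\alpha_1}\vee\overline{K_{\alpha_2}}$. Laplacian eigenvalues are those of $L=D-A$. *)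

(* Defs.v *)
From mathcomp Require Import all_boot all_order all_algebra all_field.
Unset Printing Implicit Defensive.
Import Order.TTheory GRing.Theory Num.Theory.
Local Open Scope ring_scope.

(* Adjacency of C(alpha_1,...,alpha_i), given the REVERSED parameter list
   r = [:: alpha_i; ...; alpha_1].  Vertices are natural numbers; the vertices
   of C(alpha_1,...,alpha_{i-1}) are 0 .. m-1 with m = alpha_1+...+alpha_{i-1},
   and the new clique K_{alpha_i} occupies m .. m+alpha_i-1.
   C(alpha_1..alpha_i) = complement (C(alpha_1..alpha_{i-1}) disjoint-union K_{alpha_i}).
   The base case [::] is the empty graph, so that C(alpha_1) is the complement
   of K_{alpha_1}, i.e. the edgeless graph on alpha_1 vertices, as in the paper. *)
Fixpoint Cadj_rev (r : seq nat) (u v : nat) : bool :=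
  match r with
  | [::] => false
  | a :: r' =>
      let m := sumn r' in
      let in_union :=
        if (u < m)%N && (v < m)%N then Cadj_rev r' u v
        else if (m <= u)%N && (m <= v)%N then true
        else false in
      (u != v) && ~~ in_union
  end.

Definition Cadj (s : seq nat) (i j : 'I_(sumn s)) : bool :=
  Cadj_rev (rev s) i j.

Definition Cadjmx (s : seq nat) : 'M[algC]_(sumn s) :=
  \matrix_(i, j) (Cadj s i j)%:R.

Definition Cdeg (s : seq nat) (i : 'I_(sumn s)) : nat :=
  #|[set j | Cadj s i j]|.

Definition Clap (s : seq nat) : 'M[algC]_(sumn s) :=
  diag_mx (\row_i ((Cdeg s i)%:R : algC)) - Cadjmx s.

Definition three_distinct_eigenvalues (n : nat) (M : 'M[algC]_n) : Prop :=
  exists e : seq algC, [/\ uniq e, size e = 3%N & forall a, eigenvalue M a <-> a \in e].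

(* Main.v *)
Require Import Defs.
From mathcomp Require Import all_boot all_order all_algebra all_field.
From mathcomp Require Import zify ring lra.
Import GRing.Theory Num.Theory.
Local Open Scope ring_scope.

Section Gen.
Variable F : fieldType.

Lemma sum_pick n (g : nat -> F) a :
  \sum_(k < n) ((k == a :> nat)%:R * g k) = (a < n)%:R * g a.
Proof.
case: (ltnP a n) => H.
  rewrite (bigD1 (Ordinal H)) //= eqxx mul1r big1 ?addr0 ?mul1r //.
  move=> k Hk; rewrite (_ : (k == a :> nat) = false) ?mul0r //.
  apply/negbTE; apply: contra Hk => /eqP e; apply/eqP/val_inj => /=; exact: e.
rewrite big1 ?mul0r // => k _.
by rewrite (_ : (k == a :> nat) = false) ?mul0r // ltn_eqF // (leq_trans (ltn_ord k) H).
Qed.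

Lemma char_poly_conj n (P Q A : 'M[F]_n) :
  P *m Q = 1%:M -> char_poly (P *m A *m Q) = char_poly A.
Proof.
move=> PQ; rewrite /char_poly /char_poly_mx.
have -> : map_mx polyC (P *m A *m Q) =
   map_mx polyC P *m map_mx polyC A *m map_mx polyC Q by rewrite !map_mxM.
have e : ('X%:M : 'M[{poly F}]_n) = map_mx polyC P *m 'X%:M *m map_mx polyC Q.
  by rewrite mul_mx_scalar -scalemxAl -map_mxM PQ map_scalar_mx scalemx1.
rewrite [X in X - _]e -mulmxBl -mulmxBr !det_mulmx mulrC mulrA -det_mulmx.
by rewrite [\det (_ *m _)]det_mulmx [\det _ * \det _]mulrC -det_mulmx -map_mxM PQ map_scalar_mx det1 mul1r.
Qed.


Lemma charpoly_twin n (l : nat -> nat -> F) :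
  (forall j, (j < n)%N -> \sum_(k < n) l k j = 0) ->
  (forall k j, (0 < j < n)%N -> (k < j.-1)%N -> l k j.-1 = l k j) ->
  char_poly (\matrix_(i < n, j < n) l i j) =
  \prod_(i < n) ('X - (if i == 0 :> nat then 0 else l i.-1 i.-1 - l i.-1 i)%:P).
Proof.
move=> cs tw.
set L := \matrix_(i < n, j < n) l i j.
pose Q : 'M[F]_n := \matrix_(a, b) (if b == 0 :> nat then (a == 0 :> nat)%:R
                     else (a == b.-1 :> nat)%:R - (a == b :> nat)%:R).
pose P : 'M[F]_n := \matrix_(a, b) (if a == 0 :> nat then 1
                     else if (a <= b)%N then -1 else 0).
have PQ : P *m Q = 1%:M.
  apply/matrixP => i j; rewrite !mxE.
  under eq_bigr => k _ do rewrite !mxE.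
  case: (j =P 0 :> nat) => [j0|jn0].
    under eq_bigr => k _ do rewrite mulrC.
    rewrite (sum_pick _ (fun k => if i == 0 :> nat then 1 else if (i <= k)%N then -1 else 0) 0).
    have n0 : (0 < n)%N by apply: leq_ltn_trans (ltn_ord j).
    rewrite n0 mul1r.
    case: (i =P 0 :> nat) => [i0|in0].
      by rewrite (_ : i == j) //; apply/eqP/val_inj; rewrite /= i0 j0.
    have ilt : (i <= 0)%N = false by apply/negbTE; lia.
    rewrite ilt (_ : (i == j) = false) //; apply/negbTE; apply/eqP => e; apply: in0; by rewrite e.
  under eq_bigr => k _ do rewrite mulrBr mulrC [X in _ - X]mulrC.
  rewrite sumrB.
  rewrite (sum_pick _ (fun k => if i == 0 :> nat then 1 else if (i <= k)%N then -1 else 0) j.-1).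
  rewrite (sum_pick _ (fun k => if i == 0 :> nat then 1 else if (i <= k)%N then -1 else 0) j).
  have H1 : (j.-1 < n)%N by case: j jn0 => [[|m] Hm] //= _; lia.
  rewrite H1 ltn_ord !mul1r.
  case: (i =P 0 :> nat) => [i0|in0].
    rewrite subrr (_ : (i == j) = false) //; apply/negbTE; apply/eqP => e; apply: jn0; by rewrite -e.
  case: (ltngtP i j) => Hij.
  - rewrite (_ : (i == j) = false) /=; last by apply/negbTE; apply/eqP => e; move: Hij; rewrite e ltnn.
    by rewrite (_ : (i <= j.-1)%N) ?(_ : (i <= j)%N) ?subrr //; lia.
  - rewrite (_ : (i == j) = false) /=; last by apply/negbTE; apply/eqP => e; move: Hij; rewrite e ltnn.
    by rewrite (_ : (i <= j.-1)%N = false) ?(_ : (i <= j)%N = false) ?subrr //; lia.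
  - rewrite (_ : i == j) /=; last by apply/eqP/val_inj.
    rewrite (_ : (i <= j.-1)%N = false) ?(_ : (i <= j)%N); try lia.
    by rewrite opprK add0r.
have LQ : forall (k j : 'I_n), (L *m Q) k j =
    if j == 0 :> nat then l k 0 else l k j.-1 - l k j.
  move=> k j; rewrite !mxE.
  under eq_bigr => m _ do rewrite !mxE.
  case: (j =P 0 :> nat) => [j0|jn0].
    under eq_bigr => m _ do rewrite mulrC.
    by rewrite (sum_pick _ (fun m => l k m) 0) (leq_ltn_trans _ (ltn_ord j)) // mul1r.
  under eq_bigr => m _ do rewrite mulrBr mulrC [X in _ - X]mulrC.
  rewrite sumrB (sum_pick _ (fun m => l k m) j.-1) (sum_pick _ (fun m => l k m) j).
  have H1 : (j.-1 < n)%N by case: j jn0 => [[|m] Hm] //= _; lia.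
  by rewrite H1 ltn_ord !mul1r.
have csG : forall j : 'I_n, \sum_(k < n) (L *m Q) k j = 0.
  move=> j; under eq_bigr => k _ do rewrite LQ.
  case: (j =P 0 :> nat) => [j0|jn0]; first by rewrite -j0 cs.
  have H1 : (j.-1 < n)%N by case: j jn0 => [[|m] Hm] //= _; lia.
  by rewrite sumrB !cs // subrr.
have TE : forall (i j : 'I_n), (P *m L *m Q) i j =
    if i == 0 :> nat then 0 else \sum_(k < n) (k < i)%:R * (L *m Q) k j.
  move=> i j; rewrite -mulmxA mxE.
  under eq_bigr => k _ do rewrite mxE.
  case: (i =P 0 :> nat) => [i0|in0].
    by under eq_bigr => k _ do rewrite mul1r; rewrite csG.
  rewrite -[LHS]addr0 -[X in _ + X](csG j) -big_split /=; apply: eq_bigr => k _.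
  by case: (leqP i k) => H; rewrite ?mulN1r ?addNr ?mul0r ?add0r ?mul1r.
have trig : is_trig_mx (P *m L *m Q).
  apply/is_trig_mxP => i j Hij; rewrite TE.
  case: (i =P 0 :> nat) => [//|in0].
  rewrite big1 // => k _; rewrite LQ.
  case: (ltnP k i) => Hk; last by rewrite mul0r.
  rewrite (_ : (j == 0 :> nat) = false); last by apply/negbTE; lia.
  move: (ltn_ord j) => jn; rewrite tw ?subrr ?mulr0 //; lia.
rewrite -(@char_poly_conj n P Q L PQ) (char_poly_trig trig); apply: eq_bigr => i _.
rewrite TE; case: (i =P 0 :> nat) => [//|in0].
have H1 : (i.-1 < n)%N by case: i in0 => [[|m] Hm] //= _; lia.
rewrite (bigD1 (Ordinal H1)) //= LQ /= (_ : (i.-1 < i)%N) ?mul1r; last by lia.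
rewrite (_ : (i == 0 :> nat) = false); last by apply/negbTE/eqP.
rewrite big1 ?addr0 // => k Hk; rewrite LQ.
case: (ltnP k i) => Hki; last by rewrite mul0r.
have Hk' : (k < i.-1)%N.
  have : (k : nat) != i.-1 by apply: contra Hk => /eqP e; apply/eqP/val_inj.
  lia.
rewrite (_ : (i == 0 :> nat) = false); last by apply/negbTE/eqP.
by move: (ltn_ord i) => iN; rewrite tw ?subrr ?mulr0 //; lia.
Qed.

End Gen.


Lemma Cadj_irr r u : Cadj_rev r u u = false.
Proof. by case: r => //= a r; rewrite eqxx. Qed.

Lemma Cadj_sym r u v : Cadj_rev r u v = Cadj_rev r v u.
Proof.
elim: r u v => //= a r IH u v.
by rewrite eq_sym IH [(v < _)%N && _]andbC [(_ <= v)%N && _]andbC.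
Qed.

Lemma Cadj2 a1 a2 u v : Cadj_rev [:: a2; a1] u v = (u != v) && ((u < a1)%N || (v < a1)%N).
Proof.
rewrite /= addn0.
case: (u =P v) => //= _; case: (ltnP u a1) => Hu; case: (ltnP v a1) => Hv //=; rewrite ?andbF //.
Qed.

Lemma cnt_neq n u : (u < n)%N -> (\sum_(j < n) (u != j :> nat) = n.-1)%N.
Proof.
elim: n => // n IH H; rewrite big_ord_recr /=.
case: (ltnP u n) => H2.
  rewrite IH // (_ : u != n); last by rewrite neq_ltn H2.
  by rewrite addn1 prednK // (leq_ltn_trans _ H2).
have -> : u = n by lia.
rewrite eqxx addn0 /= -[RHS]card_ord -sum1_card; apply: eq_bigr => j _.
by rewrite neq_ltn ltn_ord orbT.
Qed.

Lemma cnt_lt n a : (a <= n)%N -> (\sum_(j < n) (j < a)%N = a)%N.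
Proof.
elim: n => [|n IH H]; first by rewrite leqn0 => /eqP -> ; rewrite big_ord0.
rewrite big_ord_recr /=.
case: (ltnP a n.+1) => H2.
  by rewrite IH ?(_ : (n < a)%N = false) ?addn0 //; lia.
have Ha : a = n.+1 by lia.
rewrite Ha addn1; congr _.+1.
rewrite -[RHS]card_ord -sum1_card; apply: eq_bigr => j _.
by rewrite (ltn_trans (ltn_ord j)).
Qed.

Definition adjr s (u v : nat) := Cadj_rev (rev s) u v.
Definition degn s u := (\sum_(j < sumn s) adjr s u j)%N.
Definition ell s (a b : nat) : algC :=
  (a == b)%:R * (degn s a)%:R - (adjr s a b)%:R.

Lemma Clap_E s : Clap s = \matrix_(i, j) ell s i j.
Proof.
apply/matrixP => i j; rewrite !mxE /ell.
have -> : Cdeg s i = degn s i.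
  rewrite /Cdeg -sum1_card big_mkcond /=; apply: eq_bigr => k _.
  by rewrite inE /Cadj /adjr; case: (Cadj_rev _ _ _).
rewrite /Cadj /adjr; case: (i =P j) => [->|ne].
  by rewrite eqxx mulr1n mul1r.
rewrite (_ : (i == j :> nat) = false) ?mulr0n ?mul0r //.
by apply/negbTE/eqP => e; apply: ne; apply: val_inj.
Qed.

Lemma colsum_ell s j : (j < sumn s)%N -> \sum_(k < sumn s) ell s k j = 0.
Proof.
move=> H; rewrite /ell sumrB.
rewrite (sum_pick _ _ (fun k => (degn s k)%:R : algC) j) H mul1r.
rewrite -natr_sum /degn; apply/eqP; rewrite subr_eq0; apply/eqP; congr _%:R.
by apply: eq_bigr => k _; rewrite /adjr Cadj_sym.
Qed.

Lemma adj2E a1 a2 u v : adjr [:: a1; a2] u v = (u != v) && ((u < a1)%N || (v < a1)%N).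
Proof. exact: Cadj2. Qed.

Lemma diag2 a1 a2 i : (0 < i < a1 + a2)%N ->
  ell [:: a1; a2] i.-1 i.-1 - ell [:: a1; a2] i.-1 i =
  (if (i.-1 < a1)%N then a1 + a2 else a1)%N%:R.
Proof.
move=> /andP [i0 iN].
rewrite /ell !adj2E eqxx /= mul1r (_ : (i.-1 == i) = false); last by apply/negbTE; lia.
rewrite mul0r sub0r opprK subr0 -natrD; congr _%:R.
rewrite /degn /= addn0.
under eq_bigr => j _ do rewrite adj2E.
case: (ltnP i.-1 a1) => H.
  under eq_bigr => j _ do rewrite orTb andbT.
  rewrite orTb cnt_neq /=; lia.
rewrite orFb (_ : (i < a1)%N = false) /=; last by apply/negbTE; lia.
rewrite addn0 -[RHS](@cnt_lt (a1 + a2) a1) ?leq_addr //.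
apply: eq_bigr => j _; case: (ltnP j a1) => Hj; rewrite ?andbF // andbT.
by rewrite neq_ltn (leq_trans Hj H) orbT.
Qed.

Lemma charpoly2 a1 a2 : (0 < a1)%N -> (0 < a2)%N ->
  char_poly (Clap [:: a1; a2])
   = ('X - ((a1 + a2)%N)%:R%:P) ^+ a1 * ('X - a1%:R%:P) ^+ (a2.-1) * 'X.
Proof.
move=> a1p a2p.
rewrite Clap_E (charpoly_twin _ _ (ell [:: a1; a2])); first last.
- move=> k j /andP [j0 jN] kj.
  have e1 : (k == j.-1) = false by apply/negbTE; lia.
  have e2 : (k == j) = false by apply/negbTE; lia.
  rewrite /ell !adj2E e1 e2 !mul0r; congr (_ - _%:R).
  case: (ltnP k a1) => Hk; first by [].
  have e3 : (j.-1 < a1)%N = false by apply/negbTE; lia.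
  have e4 : (j < a1)%N = false by apply/negbTE; lia.
  by rewrite e3 e4.
- by move=> j; apply: colsum_ell.
rewrite -(big_mkord xpredT (fun i : nat => 'X - (if i == 0 :> nat then 0 else
     ell [:: a1; a2] i.-1 i.-1 - ell [:: a1; a2] i.-1 i)%:P)).
have -> : sumn [:: a1; a2] = (a1 + a2)%N by rewrite /= addn0.
rewrite big_ltn; last by lia.
rewrite (@big_cat_nat _ _ _ a1.+1); [|by []|lia].
rewrite (eq_big_nat _ _ (F2 := fun _ => 'X - ((a1 + a2)%N)%:R%:P)); last first.
  move=> i Hi; have e : (i == 0) = false by apply/negbTE; lia.
  have e' : (i.-1 < a1)%N by lia.
  by rewrite e diag2 ?e' //; lia.
rewrite [X in _ * (_ * X)](eq_big_nat _ _ (F2 := fun _ => 'X - (a1%:R)%:P)); last first.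
  move=> i Hi; have e : (i == 0) = false by apply/negbTE; lia.
  have e' : (i.-1 < a1)%N = false by apply/negbTE; lia.
  by rewrite e diag2 ?e' //; lia.
have f1 : (a1.+1 - 1 = a1)%N by lia.
have f2 : (a1 + a2 - a1.+1 = a2.-1)%N by lia.
rewrite !prodr_const_nat f1 f2 eqxx subr0 mulrC.
by []. Qed.


Lemma root_pow (a x : algC) k : root (('X - a%:P) ^+ k) x = (0 < k)%N && (x == a).
Proof. case: k => [|k]. by rewrite expr0 (negbTE (root1 _)). by rewrite root_exp_XsubC. Qed.

Lemma eig2 a1 a2 x : (0 < a1)%N -> (0 < a2)%N ->
  eigenvalue (Clap [:: a1; a2]) x =
  [|| (x == (a1 + a2)%N%:R), (1 < a2)%N && (x == a1%:R) | x == 0].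
Proof.
move=> h1 h2; rewrite eigenvalue_root_char charpoly2 // !rootM !root_pow rootX h1 /=.
have e : (0 < a2.-1)%N = (1 < a2)%N by lia.
by rewrite e -orbA.
Qed.

Lemma part1 a1 a2 : (0 < a1)%N -> (2 <= a2)%N ->
  @three_distinct_eigenvalues _ (Clap [:: a1; a2]).
Proof.
move=> h1 h2; exists [:: (a1 + a2)%N%:R; a1%:R; 0]; split => //.
  rewrite /= !inE !negb_or.
  rewrite eqr_nat !pnatr_eq0 andbT; apply/andP; split; [apply/andP; split|]; lia.
move=> x; rewrite eig2 //; last by lia.
by rewrite h2 /= !inE.
Qed.


Lemma cnt_int n a b : (\sum_(i < n) ((a <= i) && (i < b))%N = minn b n - a)%N.
Proof.
elim: n => [|n IH]; first by rewrite big_ord0; lia.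
rewrite big_ord_recr /= IH.
case: (leqP a n) => H1; case: (ltnP n b) => H2 /=; lia.
Qed.

Lemma sum_ind n a b (c : algC) : (b <= n)%N ->
  \sum_(i < n) ((a <= i) && (i < b))%N%:R * c = (b - a)%N%:R * c.
Proof.
move=> H; rewrite -big_distrl /= -natr_sum cnt_int; congr (_%:R * _); lia.
Qed.

Lemma eigvec s (f : nat -> algC) (lam : algC) :
  (exists i, (i < sumn s)%N /\ f i != 0) ->
  (forall j, (j < sumn s)%N ->
     \sum_(i < sumn s) (adjr s j i)%:R * (f j - f i) = lam * f j) ->
  eigenvalue (Clap s) lam.
Proof.
move=> [i0 [Hi0 fi0]] H.
apply/eigenvalueP; exists (\row_i f i); last first.
  apply/eqP => /rowP /(_ (Ordinal Hi0)); rewrite !mxE /= => e.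
  by move: fi0; rewrite e eqxx.
apply/rowP => j; rewrite Clap_E !mxE -H //.
under eq_bigr => i _ do rewrite !mxE.
under [RHS]eq_bigr => i _ do rewrite mulrBr.
rewrite sumrB /ell.
under eq_bigr => i _ do rewrite mulrBr.
rewrite sumrB; congr (_ - _).
  under eq_bigr => i _ do rewrite mulrCA.
  rewrite (sum_pick _ _ (fun k => f k * (degn s k)%:R) j) ltn_ord mul1r.
  by rewrite -big_distrl /= -natr_sum mulrC /degn.
apply: eq_bigr => i _; by rewrite /adjr Cadj_sym mulrC.
Qed.

Lemma sum_ind0 n b (c : algC) : (b <= n)%N ->
  \sum_(i < n) (i < b)%N%:R * c = b%:R * c.
Proof. by move=> H; have := @sum_ind n 0 b c H; rewrite subn0. Qed.


Section K4.
Variables (x y z : nat) (r3 s : seq nat).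
Hypothesis Hs : rev s = [:: x, y, z & r3].

Lemma adj4 u v : u != v -> adjr s u v =
  if (u < y + (z + sumn r3))%N && (v < y + (z + sumn r3))%N then
     (if (u < z + sumn r3)%N && (v < z + sumn r3)%N then
        ~~ (if (u < sumn r3)%N && (v < sumn r3)%N then Cadj_rev r3 u v
            else (sumn r3 <= u)%N && (sumn r3 <= v)%N)
      else (z + sumn r3 <= u)%N && (z + sumn r3 <= v)%N)
  else ~~ ((y + (z + sumn r3) <= u)%N && (y + (z + sumn r3) <= v)%N).
Proof.
move=> uv; rewrite /adjr Hs /= uv /=.
by repeat case: ifP => //=; rewrite ?negbK.
Qed.


Hypothesis (xp : (0 < x)%N) (yp : (0 < y)%N) (zp : (0 < z)%N) (n3p : (0 < sumn r3)%N).

Definition reg (i : nat) : nat :=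
  if (i < sumn r3)%N then 0 else if (i < z + sumn r3)%N then 1
  else if (i < y + (z + sumn r3))%N then 2 else 3.

Definition aa (q r : nat) : bool :=
  (q != r) && ~~ (((q < 2)%N && (r == 2)) || ((q == 2) && (r < 2)%N)).

Lemma sumnE : sumn s = (x + (y + (z + sumn r3)))%N.
Proof. by rewrite -sumn_rev Hs. Qed.

Ltac regs t := case: (ltnP t (sumn r3)) => ?; case: (ltnP t (z + sumn r3)) => ?;
  case: (ltnP t (y + (z + sumn r3))) => ?.

Lemma adj_reg i j : reg i != reg j -> adjr s j i = aa (reg j) (reg i).
Proof.
move=> rij.
have ji : j != i by apply: contra rij => /eqP ->.
rewrite adj4 // /aa /reg.
move: rij; rewrite /reg.
regs i; regs j; try (exfalso; lia); by [].
Qed.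


Lemma sum_reg (F : nat -> algC) j : (j < sumn s)%N ->
  \sum_(i < sumn s) (adjr s j i)%:R * (F (reg j) - F (reg i)) =
    (sumn r3)%:R * ((aa (reg j) 0)%:R * (F (reg j) - F 0))
  + z%:R * ((aa (reg j) 1)%:R * (F (reg j) - F 1))
  + y%:R * ((aa (reg j) 2)%:R * (F (reg j) - F 2))
  + x%:R * ((aa (reg j) 3)%:R * (F (reg j) - F 3)).
Proof.
move=> jN.
set G := fun r => (aa (reg j) r)%:R * (F (reg j) - F r).
have pt : forall i, (adjr s j i)%:R * (F (reg j) - F (reg i)) = G (reg i).
  move=> i; rewrite /G; case: (eqVneq (reg i) (reg j)) => [e|ne].
    by rewrite e subrr !mulr0.
  by rewrite adj_reg.
under eq_bigr => i _ do rewrite pt.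
have N := sumnE.
rewrite (eq_bigr (fun i : 'I_(sumn s) =>
     ((0 <= i) && (i < sumn r3))%N%:R * G 0
   + ((sumn r3 <= i) && (i < z + sumn r3))%N%:R * G 1
   + ((z + sumn r3 <= i) && (i < y + (z + sumn r3)))%N%:R * G 2
   + ((y + (z + sumn r3) <= i) && (i < sumn s))%N%:R * G 3)); last first.
  move=> i _; rewrite ltn_ord /reg.
  have iN : (i < x + (y + (z + sumn r3)))%N by rewrite -N ltn_ord.
  regs (nat_of_ord i); try (exfalso; lia); rewrite /= ?mul1r ?mul0r ?addr0 ?add0r //.
rewrite !big_split /= !sum_ind ?N //; try lia.
rewrite sum_ind0 ?N ?addnK //; lia.
Qed.


Lemma eigK (F : nat -> algC) lam : F 0 != 0 ->
  (forall q, (q < 4)%N ->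
    (sumn r3)%:R * ((aa q 0)%:R * (F q - F 0))
  + z%:R * ((aa q 1)%:R * (F q - F 1))
  + y%:R * ((aa q 2)%:R * (F q - F 2))
  + x%:R * ((aa q 3)%:R * (F q - F 3)) = lam * F q) ->
  eigenvalue (Clap s) lam.
Proof.
move=> F0 H; apply: (@eigvec s (fun i => F (reg i))).
  exists 0%N; rewrite sumnE /reg n3p; split => //; lia.
move=> j jN; rewrite sum_reg // H //.
by rewrite /reg; repeat case: ifP.
Qed.

Let N := (x + (y + (z + sumn r3)))%N.

Lemma eig_0 : eigenvalue (Clap s) 0.
Proof.
apply: (@eigK (fun _ => 1)); first exact: oner_neq0.
by move=> q _; rewrite !subrr !mulr0 mul0r !addr0.
Qed.

Lemma eig_N : eigenvalue (Clap s) N%:R.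
Proof.
apply: (@eigK (nth 0 [:: x%:R; x%:R; x%:R; - (y + (z + sumn r3))%N%:R])).
  by rewrite /= pnatr_eq0 -lt0n.
move=> [|[|[|[|q]]]] //= _; rewrite /aa /= /N !natrD; ring.
Qed.

Lemma eig_x : eigenvalue (Clap s) x%:R.
Proof.
apply: (@eigK (nth 0 [:: y%:R; y%:R; - (z + sumn r3)%N%:R; 0])).
  by rewrite /= pnatr_eq0 -lt0n.
move=> [|[|[|[|q]]]] //= _; rewrite /aa /= !natrD; ring.
Qed.

Lemma eig_zx : eigenvalue (Clap s) (z + sumn r3 + x)%N%:R.
Proof.
apply: (@eigK (nth 0 [:: z%:R; - (sumn r3)%:R; 0; 0])).
  by rewrite /= pnatr_eq0 -lt0n.
move=> [|[|[|[|q]]]] //= _; rewrite /aa /= !natrD; ring.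
Qed.

End K4.


Lemma not3_a21 a1 : (0 < a1)%N -> ~ @three_distinct_eigenvalues _ (Clap [:: a1; 1%N]).
Proof.
move=> h1 [e [ue se He]].
have : leq (size e) (size [:: ((a1 + 1)%N)%:R; (0 : algC)]).
  apply: uniq_leq_size => // t /He; rewrite eig2 //= !inE.
  by [].
by rewrite se.
Qed.

Lemma not3_k4 x y z r3 s : rev s = [:: x, y, z & r3] ->
  (0 < x)%N -> (0 < y)%N -> (0 < z)%N -> (0 < sumn r3)%N ->
  ~ @three_distinct_eigenvalues _ (Clap s).
Proof.
move=> Hs xp yp zp np [e [ue se He]].
have : leq (size [:: (0 : algC); x%:R; (z + sumn r3 + x)%N%:R; (x + (y + (z + sumn r3)))%N%:R])
          (size e).
  apply: uniq_leq_size.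
    rewrite /= !inE !negb_or !eqr_nat !(eq_sym 0) !pnatr_eq0 andbT.
    apply/and3P; split; [apply/and3P; split|apply/andP; split|]; lia.
  move=> t; rewrite !inE => /or4P [] /eqP ->; apply/He.
  - exact: (eig_0 _ _ _ _ _ Hs xp yp zp np).
  - exact: (eig_x _ _ _ _ _ Hs xp yp zp np).
  - exact: (eig_zx _ _ _ _ _ Hs xp yp zp np).
  - exact: (eig_N _ _ _ _ _ Hs xp yp zp np).
by rewrite se.
Qed.

Theorem mainTheorem9 :
  (forall a1 a2 : nat, (0 < a1)%N -> (2 <= a2)%N ->
     char_poly (Clap [:: a1; a2])
       = ('X - ((a1 + a2)%N)%:R%:P) ^+ a1 * ('X - a1%:R%:P) ^+ (a2.-1) * 'X
     /\ @three_distinct_eigenvalues _ (Clap [:: a1; a2]))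
  /\
  (forall s : seq nat, all (fun a => 0 < a)%N s -> ~~ odd (size s) -> (0 < size s)%N ->
     (@three_distinct_eigenvalues _ (Clap s) <-> size s = 2%N /\ (2 <= nth 0%N s 1)%N)).
Proof.
split.
  move=> a1 a2 h1 h2; split; first by apply: charpoly2 => //; lia.
  exact: part1.
move=> s alls ev sp.
case: (eqVneq (size s) 2%N) => s2.
  case: s alls ev sp s2 => [|a1 [|a2 [|a3 t]]] //= alls _ _ _.
  move: alls => /and3P [h1 h2 _]; split; last by move=> [_ H]; apply: part1.
  move=> H3; split => //.
  case: (ltnP 1 a2) => // H; have a21 : a2 = 1%N by lia.
  by move: H3; rewrite a21 => /(@not3_a21 a1 h1).
split; last by move=> [e _]; move: s2; rewrite e.
move=> H3.
have s4 : (4 <= size s)%N.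
  clear -ev sp s2; move: ev sp s2; case: s => [|a1 [|a2 [|a3 t]]] //=.
  by case: t => //; rewrite /= ?negbK.
move: alls; rewrite -all_rev -size_rev in s4 *.
case R: (rev s) s4 => [|x [|y [|z r3]]] //= s4.
move=> /and4P [xp yp zp ar3].
have np : (0 < sumn r3)%N.
  move: s4 ar3; clear R H3; case: r3 => //= w r _ /andP [wp _]; lia.
by exfalso; exact: (not3_k4 _ _ _ _ _ R xp yp zp np H3).
Qed.
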